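(* Let $0\le\gamma\le1$ and let $g\colon\{0,1\}^m\to\{0,1\}^n$ be a $(d,r)$-local function. Then $$\|g(\mathcal{U}^m)-\mathcal{U}^n_\gamma\|\ge 1-2\exp\left\{-\frac{\mathsf{err}(\gamma,d)^2\cdot r}{2}\right\}.$$
   Context: $\mathcal{U}^m$ is uniform on $\{0,1\}^m$; $\mathcal{U}^n_\gamma$ is the product distribution on $\{0,1\}^n$ with each bit independently $1$ with probability $\gamma$. A function $g\colon\{0,1\}^m\to\{0,1\}^n$ is $d$-local if each output bit depends on at most $d$ input bits; for an output index $i$, let $I_g(i)\subseteq[m]$ be the set of input coordinates on which output bit $i$ depends. Output bits $i_1,\dots,i_r$ are non-connected if the sets $I_g(i_1),\dots,I_g(i_r)$ are pairwise disjoint. $g$ is $(d,r)$-local if it is $d$-local and has $r$ non-connected output bits. $\mathsf{err}(\gamma,t)$ is the minimum distance of $\gamma$ to an integer multiple of $2^{-t}$. $\|\cdot\|$ is total variation distance. *)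

(* Defs.v *)
From HB Require Import structures.
From mathcomp Require Import all_boot all_order all_algebra.
From mathcomp Require Import boolp classical_sets reals.
From mathcomp.analysis Require Import sequences exp.
Set Implicit Arguments. Unset Strict Implicit. Unset Printing Implicit Defensive.
Import Order.TTheory GRing.Theory Num.Theory.
Local Open Scope ring_scope.


Definition bits (n : nat) := {ffun 'I_n -> bool}.

Definition flip (m : nat) (x : bits m) (j : 'I_m) : bits m :=
  [ffun k => if k == j then ~~ x k else x k].

Definition depset (m n : nat) (g : bits m -> bits n) (i : 'I_n) : {set 'I_m} :=
  [set j | [exists x : bits m, g x i != g (flip x j) i]].

Definition d_local (m n d : nat) (g : bits m -> bits n) : Prop :=
  forall i : 'I_n, (#|depset g i| <= d)%N.

Definition has_nonconnected (m n r : nat) (g : bits m -> bits n) : Prop :=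
  exists S : {set 'I_n}, #|S| = r /\
    forall i1 i2, i1 \in S -> i2 \in S -> i1 != i2 ->
      [disjoint depset g i1 & depset g i2].

Definition dr_local (m n d r : nat) (g : bits m -> bits n) : Prop :=
  d_local d g /\ has_nonconnected r g.

Definition pushU (R : realType) (m n : nat) (g : bits m -> bits n) (y : bits n) : R :=
  #|[set x : bits m | g x == y]|%:R / (2 ^+ m).

Definition biasedU (R : realType) (n : nat) (gamma : R) (y : bits n) : R :=
  \prod_(i < n) (if y i then gamma else 1 - gamma).

Definition tvdist (R : realType) (n : nat) (P Q : bits n -> R) : R :=
  2^-1 * \sum_(y : bits n) `|P y - Q y|.

Definition err (R : realType) (gamma : R) (t : nat) : R :=
  inf [set `|gamma - k%:~R / 2 ^+ t| | k in [set: int]]%classic.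

(* Main.v *)
Require Import Defs.
From HB Require Import structures.
From mathcomp Require Import all_boot all_order all_algebra.
From mathcomp Require Import boolp classical_sets reals.
From mathcomp.analysis Require Import sequences exp.
From mathcomp Require Import ring lra.
Import Order.TTheory GRing.Theory Num.Theory.
Local Open Scope ring_scope.
Set Implicit Arguments. Unset Strict Implicit. Unset Printing Implicit Defensive.

Definition Ex (R : realType) (m : nat) (F : bits m -> R) : R :=
  (\sum_x F x) / 2 ^+ m.

Definition depR (R : realType) (m : nat) (F : bits m -> R) (D : pred 'I_m) :=
  forall x y : bits m, (forall j, D j -> x j = y j) -> F x = F y.

Definition mrg (m : nat) (D : pred 'I_m) (x y : bits m) : bits m :=
  [ffun j => if D j then x j else y j].

Lemma card_bits m : #|{: bits m}| = (2 ^ m)%N.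
Proof. by rewrite card_ffun card_bool card_ord. Qed.

Lemma sum_const_bits (R : realType) m (c : R) :
  \sum_(x : bits m) c = 2 ^+ m * c.
Proof.
by rewrite sumr_const card_bits -[c *+ _]mulr_natl natrX.
Qed.

Lemma Ex_const (R : realType) m (c : R) : Ex (fun _ : bits m => c) = c.
Proof.
rewrite /Ex sum_const_bits mulrC mulrA mulVf ?mul1r //.
by rewrite expf_neq0 // pnatr_eq0.
Qed.

Lemma mrgK m (D : pred 'I_m) : injective (fun p : bits m * bits m => (mrg D p.1 p.2, mrg D p.2 p.1)).
Proof.
move=> [x y] [x' y'] /= [] /ffunP E1 /ffunP E2.
congr pair; apply/ffunP => j; have := E1 j; have := E2 j;
  rewrite !ffunE; case: (D j) => //.
Qed.

Lemma Ex_mul (R : realType) m (F G : bits m -> R) (D1 D2 : pred 'I_m) :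
  depR F D1 -> depR G D2 -> (forall j, D1 j -> D2 j -> False) ->
  Ex (fun x => F x * G x) = Ex F * Ex G.
Proof.
move=> dF dG dis.
have key : (\sum_x F x) * (\sum_x G x) = 2 ^+ m * \sum_x (F x * G x).
  rewrite big_distrl /=.
  under eq_bigr do rewrite big_distrr /=.
  rewrite pair_big /= (reindex_inj (@mrgK m D1)) /=.
  transitivity (\sum_(p : bits m * bits m) F p.1 * G p.1).
    apply: eq_bigr => -[x y] _ /=.
    congr (_ * _).
      by apply: dF => j Dj; rewrite ffunE Dj.
    apply: dG => j Dj; rewrite ffunE; case: ifP => // H.
    by case: (dis j H Dj).
  rewrite -(pair_big predT predT (fun x (y : bits m) => F x * G x)) /=.
  under eq_bigr do rewrite sum_const_bits.
  by rewrite -big_distrr.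
rewrite /Ex mulrACA key.
have h2 : (2 : R) ^+ m != 0 by rewrite expf_neq0 // pnatr_eq0.
by field.
Qed.

Lemma Ex_prod (R : realType) m n (f : 'I_n -> bits m -> R) (D : 'I_n -> pred 'I_m)
  (s : seq 'I_n) :
  (forall i, depR (f i) (D i)) -> uniq s ->
  (forall i1 i2, i1 \in s -> i2 \in s -> i1 != i2 ->
     forall j, D i1 j -> D i2 j -> False) ->
  Ex (fun x => \prod_(i <- s) f i x) = \prod_(i <- s) Ex (f i).
Proof.
move=> df; elim: s => [|i s IH] /=.
  by move=> _ _; rewrite big_nil; under eq_fun do rewrite big_nil; apply: Ex_const.
move=> /andP [nis us] dis.
rewrite big_cons.
under eq_fun do rewrite big_cons.
rewrite (@Ex_mul _ _ _ _ (D i) (fun j => has (fun k => D k j) s)).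
- rewrite IH // => i1 i2 h1 h2; apply: dis; rewrite inE ?h1 ?h2 orbT //.
- exact: df.
- move=> x y E; rewrite big_seq [RHS]big_seq; apply: eq_bigr => k ks.
  apply: df => j Dj; apply: E; apply/hasP; by exists k.
- move=> j Dij /hasP [k ks Dkj].
  apply: (dis i k _ _ _ j Dij Dkj); rewrite ?inE ?eqxx ?ks ?orbT //.
  by apply/negP => /eqP ik; move: nis; rewrite ik ks.
Qed.

Lemma dep_g m n (g : bits m -> bits n) (i : 'I_n) (x y : bits m) :
  (forall j, j \in depset g i -> x j = y j) -> g x i = g y i.
Proof.
move: {2}#|[set j | x j != y j]| (leqnn #|[set j | x j != y j]|) => k.
elim: k x => [|k IH] x hk ag.
  suff -> : x = y by [].
  apply/ffunP => j; apply/eqP/negPn/negP => hj.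
  by move: hk; rewrite leqn0 => /eqP/cards0_eq/setP/(_ j); rewrite inE hj inE.
case: (pickP (fun j => x j != y j)) => [j hj|hn]; last first.
  suff -> : x = y by [].
  by apply/ffunP => j; apply/eqP/negPn; rewrite hn.
have nj : j \notin depset g i by apply/negP => /ag /eqP; rewrite (negbTE hj).
have fl : g (flip x j) i = g x i.
  move: nj; rewrite inE negb_exists => /forallP /(_ x); rewrite negbK => /eqP.
  by move=> ->.
rewrite -fl; apply: IH.
  have sub : [set j0 | flip x j j0 != y j0] \subset ([set j0 | x j0 != y j0] :\ j).
    apply/fintype.subsetP => j0; rewrite !inE !ffunE.
    case: (j0 =P j) => [->|_] //=.
    by move: hj; case: (x j); case: (y j).
  have := subset_leq_card sub.
  move: hk; rewrite (cardsD1 j [set j0 | x j0 != y j0]) inE hj /=.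
  move=> h1 h2; rewrite -ltnS; exact: leq_ltn_trans h2 h1.
move=> j0 hj0; rewrite ffunE; case: (j0 =P j) => [e|_]; last exact: ag.
by move: nj; rewrite -e hj0.
Qed.

Definition sett m (x : bits m) (j : 'I_m) (c : bool) : bits m :=
  [ffun k => if k == j then c else x k].

Lemma flipK m (j : 'I_m) : involutive (fun x : bits m => flip x j).
Proof. by move=> x; apply/ffunP => k; rewrite !ffunE; case: (k == j) => //; rewrite negbK. Qed.

Lemma Ex_dyadic (R : realType) m (D : {set 'I_m}) (b : bits m -> bool) :
  (forall x y : bits m, (forall j, j \in D -> x j = y j) -> b x = b y) ->
  exists k : int, Ex (fun x => (b x)%:R : R) = k%:~R / 2 ^+ #|D|.
Proof.
move: {2}#|D| (erefl #|D|) => k.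
elim: k D b => [|k IH] D b hD db.
  have D0 := cards0_eq hD.
  have bc : forall x, b x = b [ffun => false].
    by move=> x; apply: db => j; rewrite D0 finset.in_set0.
  exists (b [ffun => false])%:Z.
  under eq_fun do rewrite bc.
  by rewrite Ex_const hD expr0 divr1.
have : (0 < #|D|)%N by rewrite hD.
case/card_gt0P => j jD.
have hD' : #|D :\ j| = k by move: hD; rewrite (cardsD1 j D) jD add1n => -[].
have dbc : forall c, forall x y : bits m, (forall j0, j0 \in D :\ j -> x j0 = y j0) ->
    b (sett x j c) = b (sett y j c).
  move=> c x y ag; apply: db => j0 j0D; rewrite !ffunE; case: (j0 =P j) => // /eqP nj.
  by apply: ag; rewrite !inE nj.
have [k0 E0] := IH _ (fun x => b (sett x j false)) hD' (dbc false).
have [k1 E1] := IH _ (fun x => b (sett x j true)) hD' (dbc true).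
exists (k0 + k1).
have key : (\sum_x ((b x)%:R : R)) *+ 2 =
   \sum_x ((b (sett x j false))%:R + (b (sett x j true))%:R).
  rewrite mulr2n [X in _ + X = _](reindex_inj (inv_inj (@flipK m j))) -big_split /=.
  apply: eq_bigr => x _.
  have e1 : sett x j (x j) = x by apply/ffunP => k2; rewrite !ffunE; case: (k2 =P j) => [->|].
  have e2 : sett x j (~~ x j) = flip x j by apply/ffunP => k2; rewrite !ffunE; case: (k2 =P j) => [->|].
  case hx: (x j); move: e1 e2; rewrite hx /= => e1 e2.
    by rewrite e2 e1 addrC.
  by rewrite e2 e1.
have : Ex (fun x => (b x)%:R : R) = (Ex (fun x => (b (sett x j false))%:R : R)
   + Ex (fun x => (b (sett x j true))%:R : R)) / 2.
  rewrite /Ex -mulrDl -big_split /= -key.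
  set S := (\sum_(x : bits m) ((b x)%:R : R)).
  have h2 : (2 : R) ^+ m != 0 by rewrite expf_neq0 // pnatr_eq0.
  by rewrite -[S *+ 2]mulr_natr; field; rewrite ?h2 ?expf_neq0 ?pnatr_eq0.
move=> ->; rewrite E0 E1 rmorphD /= hD hD' exprS.
have h2 : (2 : R) ^+ k != 0 by rewrite expf_neq0 // pnatr_eq0.
by field; rewrite ?h2 ?expf_neq0 ?pnatr_eq0.
Qed.

Lemma card_sum m n (g : bits m -> bits n) (y : bits n) (R : realType) :
  (#|[set x | g x == y]|%:R : R) = \sum_x ((g x == y)%:R).
Proof.
rewrite -sum1_card natr_sum /= big_mkcond; apply: eq_bigr => x _.
by rewrite inE; case: eqP.
Qed.

Lemma EP (R : realType) m n (g : bits m -> bits n) (h : bits n -> R) :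
  \sum_y pushU R g y * h y = Ex (fun x => h (g x)).
Proof.
rewrite /pushU /Ex.
under eq_bigr do rewrite card_sum mulrAC big_distrl /=.
rewrite -big_distrl /= exchange_big /=; congr (_ * _).
apply: eq_bigr => x _.
rewrite (bigD1 (g x)) //= eqxx mul1r big1 ?addr0 // => y /negbTE.
by rewrite eq_sym => ->; rewrite mul0r.
Qed.

Definition gb (R : realType) (gamma : R) (b : bool) : R := if b then gamma else 1 - gamma.

Lemma EQ (R : realType) n (gamma : R) (T : {set 'I_n}) (v : 'I_n -> bool -> R) :
  \sum_y biasedU gamma y * \prod_(i in T) v i (y i) =
  \prod_(i in T) (gamma * v i true + (1 - gamma) * v i false).
Proof.
transitivity (\sum_(y : {ffun 'I_n -> bool}) \prod_i
   (gb gamma (y i) * (if i \in T then v i (y i) else 1))).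
  apply: eq_bigr => y _; rewrite /biasedU big_split /= -big_mkcond /=.
  by [].
rewrite -(bigA_distr_bigA (fun i b => gb gamma b * (if i \in T then v i b else 1))).
rewrite [RHS]big_mkcond; apply: eq_bigr => i _.
rewrite big_bool /gb /=; case: (i \in T) => //; by rewrite !mulr1 addrC subrK.
Qed.

Lemma min_bound (R : realType) (a b W : R) : 0 <= a -> 0 <= b -> 0 < W ->
  Num.min a b <= (a * W + b / W) / 2.
Proof.
move=> a0 b0 W0.
set u := W^-1.
have Wu : W * u = 1 by rewrite /u mulfV // gt_eqF.
have u0 : 0 < u by rewrite /u invr_gt0.
have hc : Num.min a b <= a by rewrite ge_min lexx.
have hc' : Num.min a b <= b by rewrite ge_min lexx orbT.
have c0 : 0 <= Num.min a b by rewrite le_min a0 b0.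
set c := Num.min a b in hc hc' c0 *.
have k : 2 <= W + u.
  have : 0 <= u * (W - 1) ^+ 2 by apply: mulr_ge0; [exact: ltW|exact: sqr_ge0].
  nra.
nra.
Qed.

Lemma abs_min (R : realType) (a b : R) : `|a - b| = a + b - 2 * Num.min a b.
Proof.
case: (leP a b) => h.
  rewrite distrC ger0_norm ?subr_ge0 //; lra.
rewrite ger0_norm ?subr_ge0 ?ltW //; lra.
Qed.

Lemma BC_le (R : realType) (p gam : R) : 0 <= p <= 1 -> 0 <= gam <= 1 ->
  Num.sqrt (p * gam) + Num.sqrt ((1 - p) * (1 - gam)) <= expR (- ((p - gam) ^+ 2 / 2)).
Proof.
move=> /andP [p0 p1] /andP [g0 g1].
have q0 : 0 <= 1 - p by lra.
have h0 : 0 <= 1 - gam by lra.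
rewrite !sqrtrM //.
set a := Num.sqrt p; set b := Num.sqrt (1 - p).
set c := Num.sqrt gam; set e := Num.sqrt (1 - gam).
have ha : a ^+ 2 = p by rewrite sqr_sqrtr.
have hb : b ^+ 2 = 1 - p by rewrite sqr_sqrtr.
have hc : c ^+ 2 = gam by rewrite sqr_sqrtr.
have he : e ^+ 2 = 1 - gam by rewrite sqr_sqrtr.
have X1 : a ^+ 2 + b ^+ 2 = 1 by rewrite ha hb; lra.
have X2 : c ^+ 2 + e ^+ 2 = 1 by rewrite hc he; lra.
have E1 : 1 - (a * c + b * e) ^+ 2 = (a * e - b * c) ^+ 2.
  transitivity ((a ^+ 2 + b ^+ 2) * (c ^+ 2 + e ^+ 2) - (a * c + b * e) ^+ 2).
    by rewrite X1 X2 mul1r.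
  ring.
have E2 : p - gam = (a * e - b * c) * (a * e + b * c).
  transitivity (a ^+ 2 * (c ^+ 2 + e ^+ 2) - c ^+ 2 * (a ^+ 2 + b ^+ 2)).
    by rewrite X1 X2 !mulr1 ha hc.
  ring.
have E3 : (a * e + b * c) ^+ 2 <= 1.
  have : 1 - (a * e + b * c) ^+ 2 = (a * c - b * e) ^+ 2.
    transitivity ((a ^+ 2 + b ^+ 2) * (c ^+ 2 + e ^+ 2) - (a * e + b * c) ^+ 2).
      by rewrite X1 X2 mul1r.
    ring.
  have := sqr_ge0 (a * c - b * e); lra.
set BC := a * c + b * e.
have BC0 : 0 <= BC by rewrite /BC addr_ge0 // mulr_ge0 // sqrtr_ge0.
set dl := p - gam.
have K : BC ^+ 2 <= 1 - dl ^+ 2.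
  have : dl ^+ 2 <= (a * e - b * c) ^+ 2.
    rewrite /dl E2 exprMn.
    have := sqr_ge0 (a * e - b * c); have := sqr_ge0 (a * e + b * c); nra.
  rewrite /BC; lra.
have K2 : 1 - dl ^+ 2 <= expR (- (dl ^+ 2 / 2)) ^+ 2.
  rewrite -expRM_natl.
  have -> : 2%:R * - (dl ^+ 2 / 2) = - dl ^+ 2 :> R by field.
  have := expR_ge1Dx (- dl ^+ 2); lra.
have E0 : 0 <= expR (- (dl ^+ 2 / 2)) by apply: ltW; apply: expR_gt0.
set E := expR _ in K2 E0 *.
nra.
Qed.

Lemma err_ge0 (R : realType) (gamma : R) t : 0 <= err gamma t.
Proof.
rewrite /err; apply: lb_le_inf.
  by exists `|gamma - (0:int)%:~R / 2 ^+ t|; exists 0.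
by move=> y [k _ <-].
Qed.

Lemma err_le (R : realType) (gamma : R) t (k : int) :
  err gamma t <= `|gamma - k%:~R / 2 ^+ t|.
Proof.
rewrite /err.
have := @ge_inf R [set `|gamma - k0%:~R / 2 ^+ t| | k0 in [set: int]]%classic.
apply.
  by exists 0 => y [k0 _ <-].
by exists k.
Qed.

Lemma Ex_add (R : realType) m (F G : bits m -> R) :
  Ex (fun x => F x + G x) = Ex F + Ex G.
Proof. by rewrite /Ex big_split mulrDl. Qed.

Lemma Ex_mulr (R : realType) m (F : bits m -> R) (a : R) :
  Ex (fun x => F x * a) = Ex F * a.
Proof. by rewrite /Ex -big_distrl /= mulrAC. Qed.

Lemma Ex_le (R : realType) m (F G : bits m -> R) :
  (forall x, F x <= G x) -> Ex F <= Ex G.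
Proof.
move=> h; rewrite /Ex ler_pM2r ?invr_gt0 ?exprn_gt0 //.
by apply: ler_sum => x _.
Qed.

Lemma Ex_bool (R : realType) m (c : bits m -> bool) (w : bool -> R) :
  Ex (fun x => w (c x)) = Ex (fun x => (c x)%:R) * w true
    + (1 - Ex (fun x => (c x)%:R)) * w false.
Proof.
transitivity (Ex (fun x => w false + (c x)%:R * (w true - w false))).
  by congr Ex; apply: funext => x; case: (c x); rewrite ?mul1r ?mul0r ?addr0 // addrC subrK.
by rewrite Ex_add Ex_const Ex_mulr; ring.
Qed.

Lemma min0l (R : realType) (b : R) : 0 <= b -> Num.min 0 b = 0.
Proof. by move=> hb; case: (leP 0 b) => h //; move: (lt_le_trans h hb); rewrite ltxx. Qed.

Lemma min0r (R : realType) (a : R) : 0 <= a -> Num.min a 0 = 0.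
Proof. by move=> hb; case: (leP a 0) => h //; apply/eqP; rewrite eq_le h hb. Qed.

Lemma sq_step (R : realType) (e x gam : R) : 0 <= e -> e <= `|gam - x| ->
  - ((x - gam) ^+ 2 / 2) <= - (e ^+ 2 / 2).
Proof.
move=> e0 h.
have : e * e <= `|gam - x| * `|gam - x| by apply: ler_pM.
rewrite -normrM ger0_norm; last by rewrite -expr2 sqr_ge0.
move=> h2.
have : e ^+ 2 <= (x - gam) ^+ 2.
  by rewrite expr2 (le_trans h2) // -expr2 sqrrB sqrrB; lra.
lra.
Qed.

Lemma half_sum (R : realType) (B : R) : (B + B) / 2 <= B.
Proof. lra. Qed.

Lemma final_step (R : realType) (t s B E : R) : t = 1 - s -> s <= B -> B <= E -> 0 <= E ->
  1 - 2 * E <= t.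
Proof. move=> -> *; lra. Qed.

Unset Implicit Arguments.

Theorem mainTheorem3 (R : realType) (gamma : R) (m n d r : nat)
  (g : bits m -> bits n) :
  0 <= gamma <= 1 -> dr_local d r g ->
  tvdist (pushU R g) (biasedU gamma)
    >= 1 - 2 * expR (- ((err gamma d) ^+ 2 * r%:R / 2)).
Proof.
move=> hg [dl [S [cS disS]]].
move: (hg) => /andP [g0 g1].
set eps := err gamma d.
set p := fun i => Ex (fun x => ((g x i)%:R : R)).
have p01 : forall i, 0 <= p i <= 1.
  move=> i; apply/andP; split.
    rewrite -(Ex_const m (0 : R)); apply: Ex_le => x; by case: (g x i).
  rewrite -(Ex_const m (1 : R)); apply: Ex_le => x; by case: (g x i).
set pb := fun i (b : bool) => if b then p i else 1 - p i.
have pb0 : forall i b, 0 <= pb i b.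
  by move=> i [] /=; have := p01 i; lra.
have gb0 : forall b, 0 <= gb gamma b by move=> [] /=; lra.
have Exb : forall i (w : bool -> R), Ex (fun x => w (g x i)) = p i * w true + (1 - p i) * w false.
  by move=> i w; rewrite Ex_bool.
set P := pushU R g.
set Q := biasedU gamma.
have P0 : forall y, 0 <= P y by move=> y; rewrite /P /pushU divr_ge0 // exprn_ge0.
have Q0 : forall y, 0 <= Q y by move=> y; rewrite /Q /biasedU prodr_ge0 // => i _; case: (y i); lra.
have sP : \sum_y P y = 1.
  have := EP g (fun _ => 1 : R); rewrite Ex_const => <-.
  by apply: eq_bigr => y _; rewrite mulr1.
have sQ : \sum_y Q y = 1.
  have := EQ gamma [set: 'I_n] (fun _ _ => 1 : R).
  have -> : \prod_(i in [set: 'I_n]) (gamma * 1 + (1 - gamma) * 1) = 1.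
    by apply: big1 => i _; ring.
  move=> h; rewrite -[RHS]h; apply: eq_bigr => y _.
  by rewrite big1 ?mulr1.
set pos := fun i b => (0 < pb i b) && (0 < gb gamma b).
set w := fun i b => if pos i b then Num.sqrt (gb gamma b / pb i b) else 0.
set v := fun i b => if pos i b then Num.sqrt (pb i b / gb gamma b) else 0.
set BC := fun i => Num.sqrt (p i * gamma) + Num.sqrt ((1 - p i) * (1 - gamma)).
have zero_case : forall i b, ~~ pos i b -> pb i b = 0 \/ gb gamma b = 0.
  move=> i b; rewrite negb_and -!leNgt => /orP [h|h].
    by left; apply/eqP; rewrite eq_le h pb0.
  by right; apply/eqP; rewrite eq_le h gb0.
have pw : forall i b, pb i b * w i b = Num.sqrt (pb i b * gb gamma b).
  move=> i b; rewrite /w; case: ifP => [/andP [h1 h2]|h].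
    transitivity (Num.sqrt (pb i b ^+ 2) * Num.sqrt (gb gamma b / pb i b)).
      by rewrite sqrtr_sqr ger0_norm.
    rewrite -sqrtrM ?sqr_ge0 //; congr Num.sqrt; field; rewrite gt_eqF //.
  move/negbT: h => /zero_case [] ->; by rewrite ?mulr0 ?mul0r sqrtr0.
have gv : forall i b, gb gamma b * v i b = Num.sqrt (pb i b * gb gamma b).
  move=> i b; rewrite /v; case: ifP => [/andP [h1 h2]|h].
    transitivity (Num.sqrt (gb gamma b ^+ 2) * Num.sqrt (pb i b / gb gamma b)).
      by rewrite sqrtr_sqr ger0_norm.
    rewrite -sqrtrM ?sqr_ge0 //; congr Num.sqrt; field; rewrite gt_eqF //.
  move/negbT: h => /zero_case [] ->; by rewrite ?mulr0 ?mul0r sqrtr0.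
have wv : forall i b, pos i b -> w i b * v i b = 1.
  move=> i b hp; rewrite /w /v hp; move: hp => /andP [h1 h2].
  rewrite -sqrtrM ?divr_ge0 ?ltW //.
  have -> : gb gamma b / pb i b * (pb i b / gb gamma b) = 1.
    by field; rewrite !gt_eqF //.
  by rewrite sqrtr1.
have w0 : forall i b, 0 <= w i b by move=> i b; rewrite /w; case: ifP => _; rewrite ?sqrtr_ge0.
have v0 : forall i b, 0 <= v i b by move=> i b; rewrite /v; case: ifP => _; rewrite ?sqrtr_ge0.
have BCw : forall i, p i * w i true + (1 - p i) * w i false = BC i.
  by move=> i; have := pw i true; have := pw i false; rewrite /= => -> ->.
have BCv : forall i, gamma * v i true + (1 - gamma) * v i false = BC i.
  by move=> i; have := gv i true; have := gv i false; rewrite /= => -> ->.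
have EPW : \sum_y P y * \prod_(i in S) w i (y i) = \prod_(i in S) BC i.
  rewrite /P EP.
  under eq_fun do rewrite -big_enum.
  rewrite (@Ex_prod R m n (fun i x => w i (g x i)) (fun i j => j \in depset g i)).
  - rewrite big_enum; apply: eq_bigr => i _; by rewrite Exb BCw.
  - by move=> i x y h /=; rewrite (dep_g h).
  - exact: enum_uniq.
  - move=> i1 i2; rewrite !mem_enum => h1 h2 h12 j j1 j2.
    by move: (disjointFr (disS i1 i2 h1 h2 h12) j1); rewrite j2.
have EQV : \sum_y Q y * \prod_(i in S) v i (y i) = \prod_(i in S) BC i.
  by rewrite /Q EQ; apply: eq_bigr => i _; rewrite BCv.
have Pmarg : forall y i, P y <= pb i (y i).
  move=> y i.
  have -> : P y = Ex (fun x => ((g x == y)%:R : R)).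
    rewrite -(EP g (fun y0 => ((y0 == y)%:R : R))) (bigD1 y) //= eqxx mulr1 big1 ?addr0 // => y' /negbTE ->.
    by rewrite mulr0.
  apply: (@le_trans _ _ (Ex (fun x => ((g x i == y i)%:R : R)))).
    apply: Ex_le => x; case: eqP => [->|_]; rewrite ?eqxx ?ler0n //.
  rewrite (Exb i (fun b => ((b == y i)%:R : R))) /pb.
  by case: (y i) => /=; rewrite ?mulr1 ?mulr0 ?addr0 ?add0r.
have pt : forall y, Num.min (P y) (Q y) <=
    (P y * \prod_(i in S) w i (y i) + Q y * \prod_(i in S) v i (y i)) / 2.
  move=> y.
  set W := \prod_(i in S) w i (y i).
  set V := \prod_(i in S) v i (y i).
  have W0 : 0 <= W by apply: prodr_ge0 => i _.
  have V0 : 0 <= V by apply: prodr_ge0 => i _.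
  have R0 : 0 <= (P y * W + Q y * V) / 2.
    by apply: divr_ge0 => //; apply: addr_ge0; apply: mulr_ge0.
  case: (boolP [forall i in S, pos i (y i)]).
    move/forall_inP => hp.
    have Wp : 0 < W.
      apply: prodr_gt0 => i iS; rewrite /w hp // sqrtr_gt0.
      by move: (hp i iS) => /andP [h1 h2]; apply: divr_gt0.
    have WV : W * V = 1.
      by rewrite /W /V -big_split /=; apply: big1 => i iS; apply: wv; apply: hp.
    have -> : V = W^-1.
      have Wn : W != 0 by rewrite gt_eqF.
      by rewrite -[V]mul1r -(mulVf Wn) -mulrA WV mulr1.
    exact: min_bound.
  rewrite negb_forall_in => /existsP [i /andP [iS hi]].
  case: (zero_case i (y i) hi) => h.
    have Py : P y = 0 by apply/eqP; rewrite eq_le P0 andbT -h Pmarg.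
    by rewrite [X in Num.min X _]Py min0l.
  have Qy : Q y = 0.
    rewrite /Q /biasedU (bigD1 i) //=.
    by move: h; rewrite /gb => ->; rewrite mul0r.
  by rewrite [X in Num.min _ X]Qy min0r.
have tvE : tvdist P Q = 1 - \sum_y Num.min (P y) (Q y).
  rewrite /tvdist; under eq_bigr do rewrite abs_min.
  rewrite sumrB big_split /= sP sQ -big_distrr /=; by field.
have smin : \sum_y Num.min (P y) (Q y) <= \prod_(i in S) BC i.
  apply: (le_trans (ler_sum _ (fun y _ => pt y))).
  rewrite -big_distrl /= big_split /= EPW EQV; exact: half_sum.
have e0 : 0 <= eps by apply: err_ge0.
have BCb : forall i, i \in S -> 0 <= BC i <= expR (- (eps ^+ 2 / 2)).
  move=> i iS; apply/andP; split; first by rewrite addr_ge0 // sqrtr_ge0.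
  apply: (le_trans (BC_le (p01 i) hg)); rewrite ler_expR.
  have [k hk] := @Ex_dyadic R m (depset g i) (fun x => g x i)
     (fun x y h => dep_g h).
  have hd := dl i.
  pose k' : int := k * (2 ^ (d - #|depset g i|))%N%:Z.
  have pk : p i = k'%:~R / 2 ^+ d.
    rewrite /p hk /k' intrM /= -pmulrn natrX.
    have -> : (2 : R) ^+ d = 2 ^+ (d - #|depset g i|) * 2 ^+ #|depset g i|.
      by rewrite -exprD subnK.
    set a := (2 : R) ^+ (d - _); set b := (2 : R) ^+ #|_|.
    have an : a != 0 by rewrite expf_neq0 // pnatr_eq0.
    have bn : b != 0 by rewrite expf_neq0 // pnatr_eq0.
    by rewrite invfM mulrA -(mulrA _ a) mulfV // mulr1.
  by apply: sq_step => //; rewrite -/eps pk; apply: err_le.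
have pb2 : \prod_(i in S) BC i <= expR (- (eps ^+ 2 / 2)) ^+ r.
  rewrite -cS -prodr_const; exact: ler_prod.
have -> : expR (- (eps ^+ 2 * r%:R / 2)) = expR (- (eps ^+ 2 / 2)) ^+ r.
  by rewrite -expRM_natl; congr expR; field.
have := expR_gt0 (- (eps ^+ 2 / 2)) => hE.
have hEr : 0 <= expR (- (eps ^+ 2 / 2)) ^+ r by rewrite exprn_ge0 // ltW.
exact: final_step tvE smin pb2 hEr.
Qed.
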